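(* Let $(C,D)$ define an irreducible MAP of order $p$ which is either an MMPP ($D$ diagonal) or an MSPP ($C$ diagonal). Then its limiting index of dispersion of counts satisfies $d^2\ge 1$; equivalently, $$\boldsymbol{\pi} D D_Q^{\sharp} D\mathbf{1}\ \ge\ 0,$$ where $D_Q^{\sharp}=\int_0^\infty (e^{Qu}-\mathbf{1}\boldsymbol{\pi})\,du$ is the deviation matrix of $Q=C+D$.
   Context: A Markovian arrival process (MAP) of order $p$ is specified by $p\times p$ real matrices $C$ and $D$ such that $D$ has nonnegative entries, $C$ has nonnegative off-diagonal entries, and $Q=C+D$ is the generator (row sums zero) of an irreducible continuous-time Markov chain on $\{1,\dots,p\}$; $C$ is assumed nonsingular. $C$ governs phase transitions without events and $D$ phase transitions accompanied by an event; $N(t)$ counts events in $[0,t]$. $\boldsymbol{\pi}$ is the stationary distribution of $Q$ ($\boldsymbol{\pi}Q=\mathbf{0}$, $\boldsymbol{\pi}\mathbf{1}=1$), $\mathbf{1}$ the all-ones column vector, and $\lambda^*=\boldsymbol{\pi}D\mathbf{1}$. Starting the phase at $\boldsymbol{\pi}$ gives the time-stationary version. The limiting index of dispersion is $d^2=\lim_{t\to\infty}\mathrm{Var}(N(t))/\mathbb{E}[N(t)]$ for the time-stationary version, and it equals $1+\frac{2}{\lambda^*}\boldsymbol{\pi}DD_Q^{\sharp}D\mathbf{1}$. An MMPP (Markov modulated Poisson process) is a MAP with $D$ diagonal; an MSPP (Markovian switched Poisson process) is a MAP with $C$ diagonal. *)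

(* Defs.v *)
From HB Require Import structures.
From mathcomp Require Import all_boot all_order all_algebra.
Set Implicit Arguments. Unset Strict Implicit. Unset Printing Implicit Defensive.
Import Order.TTheory GRing.Theory Num.Theory.
Local Open Scope ring_scope.

Definition ones (R : realFieldType) (p : nat) : 'cV[R]_p := const_mx 1.

Definition is_generator (R : realFieldType) (p : nat) (Q : 'M[R]_p) : Prop :=
  (forall i j : 'I_p, i != j -> 0 <= Q i j) /\ Q *m ones R p = 0.

Definition irreducible_gen (R : realFieldType) (p : nat) (Q : 'M[R]_p) : Prop :=
  forall i j : 'I_p, connect (fun k l : 'I_p => (k != l) && (0 < Q k l)) i j.

Definition is_MAP (R : realFieldType) (p : nat) (C D : 'M[R]_p) : Prop :=
  [/\ (forall i j : 'I_p, 0 <= D i j),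
      (forall i j : 'I_p, i != j -> 0 <= C i j),
      is_generator (C + D),
      irreducible_gen (C + D) &
      C \in unitmx].

Definition is_MMPP (R : realFieldType) (p : nat) (C D : 'M[R]_p) : Prop :=
  is_MAP C D /\ is_diag_mx D.

Definition is_MSPP (R : realFieldType) (p : nat) (C D : 'M[R]_p) : Prop :=
  is_MAP C D /\ is_diag_mx C.

Definition stationary (R : realFieldType) (p : nat) (Q : 'M[R]_p) (pi : 'rV[R]_p) : Prop :=
  [/\ pi *m Q = 0, pi *m ones R p = 1 & forall j : 'I_p, 0 <= pi 0 j].

(* Deviation matrix D_Q^# = int_0^oo (e^{Qu} - 1 pi) du, given by its standard
   closed form (1 pi - Q)^{-1} - 1 pi. *)
Definition deviation_mx (R : realFieldType) (p : nat) (Q : 'M[R]_p) (pi : 'rV[R]_p)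
  : 'M[R]_p :=
  invmx (ones R p *m pi - Q) - ones R p *m pi.

Definition event_rate (R : realFieldType) (p : nat) (D : 'M[R]_p) (pi : 'rV[R]_p) : R :=
  (pi *m D *m ones R p) 0 0.

Definition dev_form (R : realFieldType) (p : nat) (C D : 'M[R]_p) (pi : 'rV[R]_p) : R :=
  (pi *m D *m deviation_mx (C + D) pi *m D *m ones R p) 0 0.

Definition disp_index (R : realFieldType) (p : nat) (C D : 'M[R]_p) (pi : 'rV[R]_p) : R :=
  1 + 2 / event_rate D pi * dev_form C D pi.

(* Main.v *)
Require Import Defs.
From HB Require Import structures.
From mathcomp Require Import all_boot all_order all_algebra.
From mathcomp Require Import ring lra.
Import Order.TTheory GRing.Theory Num.Theory.
Open Scope ring_scope.

Lemma dirichlet (R : realFieldType) (p : nat) (Q : 'M[R]_p) (pi : 'rV[R]_p)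
  (h : 'cV[R]_p) :
  (forall i j : 'I_p, i != j -> 0 <= Q i j) -> Q *m ones R p = 0 ->
  pi *m Q = 0 -> (forall j, 0 <= pi 0 j) ->
  \sum_i pi 0 i * h i 0 * (Q *m h) i 0 <= 0.
Proof.
move=> Qoff Q1 piQ pi0.
have rs i : \sum_j Q i j = 0.
  transitivity ((Q *m ones R p) i 0); last by rewrite Q1 mxE.
  by rewrite mxE; apply: eq_bigr => j _; rewrite mxE mulr1.
have cs j : \sum_i pi 0 i * Q i j = 0.
  transitivity ((pi *m Q) 0 j); last by rewrite piQ mxE.
  by rewrite mxE.
set S := \sum_i _.
have E : \sum_i \sum_j pi 0 i * Q i j * (h i 0 - h j 0) ^+ 2 = - (2 * S).
  transitivity (\sum_i \sum_j (pi 0 i * h i 0 ^+ 2 * Q i j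
     + h j 0 ^+ 2 * (pi 0 i * Q i j) - 2 * (pi 0 i * h i 0 * (Q i j * h j 0)))).
    by apply: eq_bigr => i _; apply: eq_bigr => j _; ring.
  under eq_bigr => i _ do rewrite sumrB big_split /=.
  rewrite sumrB big_split /=.
  rewrite big1; last by move=> i _; rewrite -mulr_sumr rs mulr0.
  rewrite exchange_big /= big1; last by move=> j _; rewrite -mulr_sumr cs mulr0.
  rewrite /S mulr_sumr add0r sub0r; congr (- _); apply: eq_bigr => i _.
  by rewrite -mulr_sumr -mulr_sumr mxE.
have : 0 <= \sum_i \sum_j pi 0 i * Q i j * (h i 0 - h j 0) ^+ 2.
  apply: sumr_ge0 => i _; apply: sumr_ge0 => j _.
  case: (eqVneq i j) => [->|ne]; first by rewrite subrr expr0n mulr0.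
  by apply: mulr_ge0; [apply: mulr_ge0; [apply: pi0 | apply: Qoff] | apply: sqr_ge0].
rewrite E => H; lra.
Qed.

Lemma dev_ge0 (R : realFieldType) (p : nat) (Q : 'M[R]_p) (pi : 'rV[R]_p)
  (u : 'rV[R]_p) (f : 'cV[R]_p) :
  is_generator Q -> stationary Q pi ->
  (forall j, u 0 j = pi 0 j * f j 0) ->
  0 <= (u *m deviation_mx Q pi *m f) 0 0.
Proof.
move=> [Qoff Q1] [piQ pi1 pi0] uf.
rewrite /deviation_mx.
set M := ones R p *m pi - Q.
have piM : pi *m M = pi.
  by rewrite /M mulmxBr piQ subr0 mulmxA pi1 mul1mx.
case: (boolP (M \in unitmx)) => Mu.
- set Z := invmx M.
  have piZ : pi *m Z = pi by rewrite -{1}piM -mulmxA mulmxV // mulmx1.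
  have QZ : Q *m Z = ones R p *m pi - 1%:M.
    have := mulmxV Mu; rewrite -/Z /M mulmxBl => H.
    by rewrite -H -mulmxA piZ opprB addrC subrK.
  set h := (Z - ones R p *m pi) *m f.
  have Qh : Q *m h = ones R p *m (pi *m f) - f.
    rewrite /h [LHS]mulmxA mulmxBr QZ [Q *m (_ *m _)]mulmxA Q1 mul0mx subr0 mulmxBl mul1mx.
    by rewrite mulmxA.
  have pih : pi *m h = 0.
    by rewrite /h mulmxA mulmxBr piZ mulmxA pi1 mul1mx subrr mul0mx.
  have fE j : f j 0 = (pi *m f) 0 0 - (Q *m h) j 0.
    by rewrite Qh !mxE big_ord1 !mxE mul1r opprB addrC subrK.
  rewrite -mulmxA -/h mxE.
  have -> : \sum_j u 0 j * h j 0 =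
     (pi *m f) 0 0 * (pi *m h) 0 0 - \sum_j pi 0 j * h j 0 * (Q *m h) j 0.
    rewrite [(pi *m h) 0 0]mxE mulr_sumr -sumrB; apply: eq_bigr => j _.
    rewrite uf fE; ring.
  have z0 : (0 : 'M[R]_1) 0 0 = 0 by rewrite mxE.
  rewrite pih z0 mulr0 sub0r oppr_ge0.
  exact: dirichlet.
- rewrite invmx_out // /M addrAC subrr add0r.
  rewrite -mulmxA mulNmx mulmxN mxE oppr_ge0.
  have -> : (u *m (Q *m f)) 0 0 = \sum_j pi 0 j * f j 0 * (Q *m f) j 0.
    by rewrite mxE; apply: eq_bigr => j _; rewrite uf.
  exact: dirichlet.
Qed.

Theorem proposition1 (R : realFieldType) (p : nat) (C D : 'M[R]_p) (pi : 'rV[R]_p) :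
  (is_MMPP C D \/ is_MSPP C D) ->
  stationary (C + D) pi ->
  1 <= disp_index C D pi /\ 0 <= dev_form C D pi.
Proof.
move=> H st.
have [D0 gen] : (forall i j, 0 <= D i j) /\ is_generator (C + D).
  by case: H => -[[]].
have [piQ pi1 pi0] := st.
have [_ Q1] := gen.
have dev : 0 <= dev_form C D pi.
  case: H => [[_ dD] | [_ dC]].
  - have DE : D = diag_mx (\row_j D j j).
      apply/matrixP => i j; rewrite !mxE; case: eqVneq => [->|ne] /=.
        by rewrite mulr1n.
      by rewrite mulr0n; apply: (is_diag_mxP dD).
    rewrite /dev_form -mulmxA; apply: dev_ge0 => // j.
    by rewrite DE mul_mx_diag mul_diag_mx !mxE mulr1.
  - have CE : C = diag_mx (\row_j C j j).
      apply/matrixP => i j; rewrite !mxE; case: eqVneq => [->|ne] /=.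
        by rewrite mulr1n.
      by rewrite mulr0n; apply: (is_diag_mxP dC).
    have e1 : pi *m D = - (pi *m C).
      by apply/eqP; rewrite -addr_eq0 addrC -mulmxDr piQ.
    have e2 : D *m ones R p = - (C *m ones R p).
      by apply/eqP; rewrite -addr_eq0 addrC -mulmxDl Q1.
    rewrite /dev_form -mulmxA e1 e2 !mulNmx !mulmxN opprK.
    apply: dev_ge0 => // j.
    by rewrite CE mul_mx_diag mul_diag_mx !mxE mulr1.
split=> //.
rewrite /disp_index lerDl; apply: mulr_ge0 => //; apply: divr_ge0 => //.
rewrite /event_rate mxE; apply: sumr_ge0 => j _; rewrite !mxE.
apply: mulr_ge0; last by apply: ler01.
by apply: sumr_ge0 => k _; apply: mulr_ge0.
Qed.
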